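(* Let $\phi$ be a Drinfeld $A$-module of any rank over a finite field $k$ of characteristic $p$. Then $\#\operatorname{Aut}(\phi)\equiv-1\pmod p$.
   Context: $C$ is a smooth, geometrically connected, proper curve over $\mathbb F_q$ ($q$ a power of the prime $p$), $\infty\in C$ a closed point with valuation $v_\infty$, $A=\mathcal O_C(C\setminus\{\infty\})$. Over a field $k\supseteq\mathbb F_q$, a Drinfeld $A$-module of rank $r$ is a ring homomorphism $\phi\colon A\to k\{\tau\}$ into the twisted polynomial ring ($\tau c=c^q\tau$, identified with $\mathbb F_q$-linear endomorphisms of $\mathbb G_a$) such that $\phi(a)$ has $\tau$-degree exactly $-r\deg(\infty)v_\infty(a)$. $\operatorname{Aut}(\phi)$ is the group of units of $k\{\tau\}$ commuting with all $\phi(a)$. *)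

(* Defs.v *)
From mathcomp Require Import all_boot all_order all_algebra.
Set Implicit Arguments. Unset Strict Implicit. Unset Printing Implicit Defensive.
Import GRing.Theory.
Local Open Scope ring_scope.

(* Twisted polynomial ring k{tau}, with tau c = c^q tau.  An element
   sum_i f_i tau^i is represented by the coefficient polynomial f : {poly k}
   (coefficient f`_i of tau^i).  Twisted product:
   (f_i tau^i)(g_j tau^j) = f_i g_j^(q^i) tau^(i+j). *)
Definition tmul (k : fieldType) (q : nat) (f g : {poly k}) : {poly k} :=
  \poly_(n < (size f + size g).-1) \sum_(i < n.+1) f`_i * (g`_(n - i)) ^+ (q ^ i).

Definition is_tunit (k : fieldType) (q : nat) (u : {poly k}) : Prop :=
  exists v : {poly k}, tmul q u v = 1 /\ tmul q v u = 1.

(* Abstract stand-in for a |-> -deg(oo) v_oo(a) on A (nonzero a):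
   additive on products, ultrametric, zero on nonzero constants of F_q. *)
Definition inf_degree (Fq : finFieldType) (A : idomainType)
  (iota : {rmorphism Fq -> A}) (degInf : A -> nat) : Prop :=
  [/\ forall a b : A, a != 0 -> b != 0 -> degInf (a * b) = (degInf a + degInf b)%N,
      forall a b : A, (a + b != 0)%R -> (degInf (a + b)%R <= maxn (degInf a) (degInf b))%N
    & forall c : Fq, c != 0 -> degInf (iota c) = 0%N].

Definition is_drinfeld_module (k : fieldType) (q : nat) (A : idomainType)
  (degInf : A -> nat) (r : nat) (phi : A -> {poly k}) : Prop :=
  [/\ phi 1 = 1,
      forall a b, phi (a + b) = phi a + phi b,
      forall a b, phi (a * b) = tmul q (phi a) (phi b)
    & forall a, a != 0 -> phi a != 0 /\ (size (phi a)).-1 = (r * degInf a)%N].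

Definition is_aut (k : fieldType) (q : nat) (A : idomainType)
  (phi : A -> {poly k}) (u : {poly k}) : Prop :=
  is_tunit q u /\ forall a : A, tmul q u (phi a) = tmul q (phi a) u.

(* Main.v *)
Require Import Defs.
From mathcomp Require Import all_boot all_order all_algebra all_fingroup all_solvable all_field.
From mathcomp Require Import zify.
From Stdlib Require ClassicalEpsilon.
Local Open Scope ring_scope.
Import GRing.Theory.

Section T.
Variables (k : fieldType) (q : nat).
Hypothesis q_gt0 : (0 < q)%N.

Lemma tmul_coef (f g : {poly k}) n : (tmul q f g)`_n =
  if (n < (size f + size g).-1)%N then \sum_(i < n.+1) f`_i * (g`_(n - i)) ^+ (q ^ i) else 0.
Proof. by rewrite /tmul coef_poly. Qed.

Lemma exp0q i : (0 : k) ^+ (q ^ i) = 0.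
Proof. by rewrite expr0n expn_eq0 eqn0Ngt q_gt0. Qed.

Lemma tmul0l (g : {poly k}) : tmul q 0 g = 0.
Proof.
apply/polyP=> n; rewrite tmul_coef coef0; case: ifP => // _.
by apply: big1 => i _; rewrite coef0 mul0r.
Qed.

Lemma tmul0r (f : {poly k}) : tmul q f 0 = 0.
Proof.
apply/polyP=> n; rewrite tmul_coef coef0; case: ifP => // _.
by apply: big1 => i _; rewrite coef0 exp0q mulr0.
Qed.

Lemma tmul_top (f g : {poly k}) : f != 0 -> g != 0 ->
  (tmul q f g)`_((size f).-1 + (size g).-1) = lead_coef f * lead_coef g ^+ (q ^ (size f).-1).
Proof.
move=> f0 g0; rewrite tmul_coef.
have sf : (0 < size f)%N by rewrite size_poly_gt0.
have sg : (0 < size g)%N by rewrite size_poly_gt0.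
rewrite ifT; last by rewrite -(prednK sf) -(prednK sg) addSn addnS /=.
have hi : ((size f).-1 < ((size f).-1 + (size g).-1).+1)%N by rewrite ltnS leq_addr.
rewrite (bigD1 (Ordinal hi)) //= addKn big1 ?addr0 //.
move=> i /eqP/val_eqP /= ne.
case: (ltngtP i (size f).-1) => [lt| gt | eq]; last by rewrite eq eqxx in ne.
- have -> : g`_((size f).-1 + (size g).-1 - i) = 0.
    apply: nth_default; move: lt sg; set a := (size f).-1; set b := (size g).-1.
    have -> : size g = b.+1 by rewrite /b prednK // size_poly_gt0.
    move=> lt _; lia.
  by rewrite exp0q mulr0.
- by rewrite nth_default ?mul0r //; move: gt; rewrite -ltnS prednK.
Qed.

Lemma tunit_const (u : {poly k}) : is_tunit q u -> exists2 c, c != 0 & u = c%:P.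
Proof.
case=> v [h _].
have u0 : u != 0 by apply: contra_eqN h => /eqP ->; rewrite tmul0l eq_sym oner_eq0.
have v0 : v != 0 by apply: contra_eqN h => /eqP ->; rewrite tmul0r eq_sym oner_eq0.
have := @tmul_top u v u0 v0; rewrite h coef1.
case: eqP => [/eqP|_]; last first.
  by move/esym/eqP; rewrite mulf_eq0 expf_eq0 !lead_coef_eq0 (negPf u0) (negPf v0) andbF.
rewrite addn_eq0 => /andP[/eqP du _] _.
have su : size u = 1%N by rewrite -(prednK (_ : 0 < size u)%N) ?du // size_poly_gt0.
exists u`_0; last by apply: size1_polyC; rewrite su.
by move: u0; rewrite -lead_coef_eq0 /lead_coef su.
Qed.

Lemma tmulCl (c : k) (f : {poly k}) : c != 0 -> tmul q c%:P f = c *: f.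
Proof.
move=> c0; apply/polyP=> n; rewrite tmul_coef coefZ size_polyC c0 /=.
case: ifP => [_|/negbT]; last by rewrite -leqNgt => /(nth_default 0) ->; rewrite mulr0.
rewrite big_ord_recl big1 ?addr0 /=; first by rewrite coefC /= subn0 expn0 expr1.
by move=> i _; rewrite coefC /= mul0r.
Qed.

Lemma tmulCr (c : k) (f : {poly k}) n : c != 0 -> (tmul q f c%:P)`_n = f`_n * c ^+ (q ^ n).
Proof.
move=> c0; rewrite tmul_coef size_polyC c0 /= addn1 /=.
case: ifP => [_|/negbT]; last by rewrite -leqNgt => /(nth_default 0) ->; rewrite mul0r.
rewrite big_ord_recr /= subnn coefC /= big1 ?add0r //.
move=> i _; rewrite coefC subn_eq0 leqNgt ltn_ord /= exp0q mulr0 //.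
Qed.

End T.
Arguments tunit_const {k q} q_gt0 {u}.

Lemma commC {k : fieldType} {q : nat} {c : k} {f : {poly k}} : (0 < q)%N -> c != 0 ->
  tmul q c%:P f = tmul q f c%:P <-> (forall n, f`_n != 0 -> c ^+ (q ^ n) = c).
Proof.
move=> q0 c0; split.
  move=> h n fn; have := congr1 (fun g : {poly k} => g`_n) h => /=.
  by rewrite tmulCl // tmulCr // coefZ mulrC => /(mulfI fn).
move=> h; apply/polyP=> n; rewrite tmulCl // tmulCr // coefZ mulrC.
by have [->|fn] := eqVneq f`_n 0; [rewrite !mul0r | rewrite h].
Qed.

Theorem lemma2p5 (p : nat) (Fq : finFieldType) (k : finFieldType)
  (j : {rmorphism Fq -> k}) (A : idomainType) (iota : {rmorphism Fq -> A})
  (degInf : A -> nat) (r : nat) (phi : A -> {poly k}) :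
  p \in [pchar k] ->
  inf_degree iota degInf ->
  (0 < r)%N ->
  is_drinfeld_module #|Fq| degInf r phi ->
  exists s : seq {poly k},
    [/\ uniq s, (forall u, u \in s <-> is_aut #|Fq| phi u)
      & ((size s).+1 %% p = 0)%N].
Proof.
move=> pch _ _ _.
set q := #|Fq|.
have q_gt0 : (0 < q)%N by apply: ltnW; apply: finNzRing_gt1.
have pFq : p \in [pchar Fq] by rewrite -(fmorph_pchar j).
have pr : prime p := pcharf_prime pch.
have cardq : q = (p ^ logn p q)%N := card_pprimeChar pFq.
have frobD : forall n (x y : k), (x + y) ^+ (q ^ n) = x ^+ (q ^ n) + y ^+ (q ^ n).
  move=> n x y; apply: exprDn_pchar; rewrite pnatX; apply/orP; left.
  rewrite (eq_pnat _ (pcharf_eq pch)) cardq pnatX pnat_id //.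
pose P (c : k) := forall (a : A) n, (phi a)`_n != 0 -> c ^+ (q ^ n) = c.
pose pb c := if ClassicalEpsilon.excluded_middle_informative (P c) then true else false.
have pbP : forall c, reflect (P c) (pb c).
  by move=> c; rewrite /pb; case: ClassicalEpsilon.excluded_middle_informative => h; constructor.
pose L := [set c | pb c].
have L0 : (0 : k) \in L by rewrite inE; apply/pbP => a n _; rewrite exp0q.
have L1 : (1 : k) \in L by rewrite inE; apply/pbP => a n _; rewrite expr1n.
exists [seq c%:P | c <- enum (L :\ 0)]; split.
- by rewrite map_inj_uniq ?enum_uniq //; apply: polyC_inj.
- move=> u; split.
    case/mapP => c; rewrite mem_enum !inE => /andP[c0 /pbP Pc] ->; split.
      exists (c^-1)%:P; rewrite !tmulCl ?invr_eq0 // !scale_polyC mulfV ?mulVf //.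
    by move=> a; apply/(commC q_gt0 c0) => n; apply: Pc.
  case=> /(tunit_const q_gt0) [c c0 ->] hc; apply/mapP; exists c => //.
  rewrite mem_enum !inE c0; apply/pbP => a n.
  by move: n; apply/(commC q_gt0 c0).
- rewrite size_map -cardE.
  have -> : (#|L :\ 0|).+1 = #|L| by rewrite (cardsD1 0 L) L0.
  have gL : group_set L.
    apply/group_setP; split; first exact: L0.
    move=> x y; rewrite !inE => /pbP Px /pbP Py; apply/pbP => a n h.
    by rewrite FinRing.zmodMgE frobD (Px a n h) (Py a n h).
  have pL : p.-nat #|Group gL|.
    exact: pgroupS (subsetT _) (pprimeChar_pgroup pch).
  have L1' : (1 < #|L|)%N.
    rewrite (cardsD1 0 L) L0 add1n ltnS; apply/card_gt0P; exists 1; rewrite !inE oner_eq0 /=; rewrite inE in L1; exact: L1.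
  apply/eqP; rewrite -/(dvdn p _).
  move: pL L1' => /= pL; rewrite -(part_pnat_id pL) p_part.
  case: (logn p #|L|) => [|l]; first by rewrite expn0.
  by move=> _; rewrite dvdn_exp.
Qed.
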